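(* Let $0<a,b<1$, $f\ge3$, and let $\overline w_{m,n}$, $q^*_n(c)$, $w^*_n(c)$ be as in the context. Define the $2\times2$ matrices $$Q(b):=\begin{bmatrix}q^*_1(b)&w^*_1(b)\\ q^*_2(b)&w^*_2(b)\end{bmatrix},\qquad B:=\begin{bmatrix}\frac{b-a}{1-a}&\frac{1-b}{1-a}\\ \kappa(a,b)&\frac{1-b}{1-a}\beta(a,b)\end{bmatrix},\quad \kappa(a,b):=\frac{b-a}{1-a}\beta(a,b)-x(a,b),$$ let $M:=Q(b)^{-1}B$, and for $1\le\ell\le f$ let $\begin{bmatrix}d_1(\ell)\\ d_2(\ell)\end{bmatrix}:=M\begin{bmatrix}w^*_\ell(a)\\ w^*_{\ell+1}(a)\end{bmatrix}$. Then for all $1\le\ell\le f$ and $j\ge1$, $$\overline w_{f-\ell,f+j}=d_1(\ell)q^*_j(b)+d_2(\ell)w^*_j(b).$$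
   Context: Let $r,y,z$ be indeterminates. For $c\in(0,1)$: $\omega_c:=1-(1-c)^2r^2y^2z^2$, $\tau_c:=1+(1-c)^2r^2z^2y(1-y)$, $x_c:=c^2z^2\tau_c^2$, $\beta_c:=1+z^2(c^2-(1-c)^2r^2(y^2+c^2(1-y)^2z^2))$; $w^*_0(c):=(\beta_c-\omega_c)/x_c$, $w^*_1(c):=1$, $w^*_{n+1}(c):=\beta_cw^*_n(c)-x_cw^*_{n-1}(c)$ ($n\ge1$); $q^*_0(c):=-(1-y)(1+y+(1-c)^2r^2y^2z^2(1-y))/\tau_c^2$, $q^*_1(c):=y^2$, $q^*_{n+1}(c):=\beta_cq^*_n(c)-x_cq^*_{n-1}(c)$ ($n\ge1$). Also $\tau(a,b):=1+(1-a)(1-b)r^2z^2y(1-y)$, $x(a,b):=b^2z^2\tau(a,b)^2$, $\beta(a,b):=\beta_b-(b-a)b^2(1-b)r^2(1-y)^2z^4$. The upward array $\overline w_{m,n}$ ($0\le m<n$): $\overline w_{m,m+1}:=1$; for $n-m\ge2$: $\overline w_{m,m+\ell}:=w^*_\ell(a)$ if $m+\ell\le f$, $:=w^*_\ell(b)$ if $f\le m$; $\overline w_{f-\ell,f+1}:=\frac{1-b}{1-a}w^*_{\ell+1}(a)+\frac{b-a}{1-a}w^*_\ell(a)$ ($1\le\ell\le f$); $\overline w_{m,f+2}:=\beta(a,b)\overline w_{m,f+1}-x(a,b)\overline w_{m,f}$ ($m\le f-1$); $\overline w_{m,f+j+1}:=\beta_b\overline w_{m,f+j}-x_b\overline w_{m,f+j-1}$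 ($m\le f-1$, $j\ge2$). *)

(* Defs.v *)
From HB Require Import structures.
From mathcomp Require Import all_boot all_order all_algebra.
From mathcomp Require Import fraction.
From mathcomp Require Import mpoly.
Set Implicit Arguments. Unset Strict Implicit. Unset Printing Implicit Defensive.
Import Order.TTheory GRing.Theory Num.Theory.
Local Open Scope ring_scope.

(* The theorem instantiates F with the field of rational functions
   R(r,y,z) = Frac(R[r,y,z]) over a real field R, r y z the indeterminates. *)
Section Defs.
Variables (F : fieldType) (a b r y z : F) (f : nat).

Definition omega (c : F) : F := 1 - (1 - c) ^+ 2 * r ^+ 2 * y ^+ 2 * z ^+ 2.
Definition tau (c : F) : F := 1 + (1 - c) ^+ 2 * r ^+ 2 * z ^+ 2 * y * (1 - y).
Definition xc (c : F) : F := c ^+ 2 * z ^+ 2 * tau c ^+ 2.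
Definition betac (c : F) : F :=
  1 + z ^+ 2 * (c ^+ 2 - (1 - c) ^+ 2 * r ^+ 2 * (y ^+ 2 + c ^+ 2 * (1 - y) ^+ 2 * z ^+ 2)).

Fixpoint wstar (c : F) (n : nat) : F :=
  match n with
  | 0 => (betac c - omega c) / xc c
  | 1 => 1
  | S ((S k) as k1) => betac c * wstar c k1 - xc c * wstar c k
  end.

Fixpoint qstar (c : F) (n : nat) : F :=
  match n with
  | 0 => - ((1 - y) * (1 + y + (1 - c) ^+ 2 * r ^+ 2 * y ^+ 2 * z ^+ 2 * (1 - y)))
         / tau c ^+ 2
  | 1 => y ^+ 2
  | S ((S k) as k1) => betac c * qstar c k1 - xc c * qstar c k
  end.

Definition tauab : F := 1 + (1 - a) * (1 - b) * r ^+ 2 * z ^+ 2 * y * (1 - y).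
Definition xab : F := b ^+ 2 * z ^+ 2 * tauab ^+ 2.
Definition betaab : F :=
  betac b - (b - a) * b ^+ 2 * (1 - b) * r ^+ 2 * (1 - y) ^+ 2 * z ^+ 4.

(* For m <= f-1: the value \overline w_{m,f} *)
Definition wtail0 (m : nat) : F := if m.+1 == f then 1 else wstar a (f - m)%N.
(* For m <= f-1, ell = f - m: \overline w_{f-ell,f+1} *)
Definition wtail1 (m : nat) : F :=
  (1 - b) / (1 - a) * wstar a (f - m).+1 + (b - a) / (1 - a) * wstar a (f - m)%N.

(* wtail m j = \overline w_{m,f+j} for m <= f-1 *)
Fixpoint wtail (m j : nat) : F :=
  match j with
  | 0 => wtail0 m
  | 1 => wtail1 m
  | 2 => betaab * wtail1 m - xab * wtail0 m
  | S ((S ((S k) as k1)) as k2) => betac b * wtail m k2 - xc b * wtail m k1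
  end.

(* The upward array \overline w_{m,n}, for 0 <= m < n (set to 0 when n <= m). *)
Definition wbar (m n : nat) : F :=
  if (n <= m)%N then 0
  else if n == m.+1 then 1
  else if (n <= f)%N then wstar a (n - m)%N
  else if (f <= m)%N then wstar b (n - m)%N
  else wtail m (n - f)%N.

Definition mx2 (p q s t : F) : 'M[F]_2 :=
  \matrix_(i < 2, j < 2)
    if i == 0 :> nat then (if j == 0 :> nat then p else q)
    else (if j == 0 :> nat then s else t).

Definition Qb : 'M[F]_2 := mx2 (qstar b 1) (wstar b 1) (qstar b 2) (wstar b 2).
Definition kappa : F := (b - a) / (1 - a) * betaab - xab.
Definition Bmx : 'M[F]_2 :=
  mx2 ((b - a) / (1 - a)) ((1 - b) / (1 - a)) kappa ((1 - b) / (1 - a) * betaab).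
Definition Mmx : 'M[F]_2 := invmx Qb *m Bmx.

Definition dvec (l : nat) : 'cV[F]_2 :=
  Mmx *m (\col_(i < 2) if i == 0 :> nat then wstar a l else wstar a l.+1).
Definition d1 (l : nat) : F := dvec l 0 0.
Definition d2 (l : nat) : F := dvec l 1 0.

End Defs.

Definition ratfun (R : realFieldType) : fieldType :=
  {fraction {mpoly R[3]}}.
Definition rcst (R : realFieldType) (c : R) : ratfun R :=
  tofrac (mpoly.mpolyC 3 c).
Definition rvar (R : realFieldType) (i : 'I_3) : ratfun R :=
  tofrac (mpoly.mpolyX R (mpoly.mnm1 i)).
Definition rr (R : realFieldType) : ratfun R := rvar R 0.
Definition ry (R : realFieldType) : ratfun R := rvar R 1.
Definition rz (R : realFieldType) : ratfun R := rvar R 2.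

(* Main.v *)
Require Import Defs.
From HB Require Import structures.
From mathcomp Require Import all_boot all_order all_algebra.
From mathcomp Require Import fraction.
From mathcomp Require Import ring zify mpoly.
Import Order.TTheory GRing.Theory Num.Theory.
Local Open Scope ring_scope.

Section Gen.
Variables (F : fieldType) (a b r y z : F) (f : nat).

Lemma mx2_sum (g : 'I_2 -> F) : \sum_(k < 2) g k = g ord0 + g (@Ordinal 2 1 isT).
Proof. rewrite !big_ord_recl big_ord0 addr0; congr (_ + g _); exact/val_inj. Qed.

Lemma mx2_unit (p s t : F) : p * t - s != 0 -> mx2 p 1 s t \in unitmx.
Proof.
move=> hd.
have: mx2 p 1 s t *m ((p * t - s)^-1 *: mx2 t (-1) (-s) p) = 1%:M.
  apply/matrixP => i j; rewrite !mxE mx2_sum ?mxE.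
  by case: i => [[|[|i]] Hi] //; case: j => [[|[|j]] Hj] //=; rewrite /mx2 ?mxE /=; field.
by case/mulmx1_unit.
Qed.

Lemma det_val : tau r y z b != 0 -> b != 0 -> z != 0 ->
  y ^+ 2 * wstar r y z b 2 - qstar r y z b 2 = - (b ^+ 2 * z ^+ 2).
Proof.
move=> ht hb hz /=.
rewrite /xc /betac /omega /=. rewrite /tau in ht *.
field. by rewrite !exprMn ht hb hz.
Qed.

Lemma wtail_rec m k : wtail a b r y z f m k.+3 =
  betac r y z b * wtail a b r y z f m k.+2 - xc r y z b * wtail a b r y z f m k.+1.
Proof. by []. Qed.
Lemma wstar_rec c k : wstar r y z c k.+2 = betac r y z c * wstar r y z c k.+1 - xc r y z c * wstar r y z c k.
Proof. by []. Qed.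
Lemma qstar_rec c k : qstar r y z c k.+2 = betac r y z c * qstar r y z c k.+1 - xc r y z c * qstar r y z c k.
Proof. by []. Qed.

Lemma entries (d : 'cV[F]_2) (u0 u1 : F) :
  Qb b r y z *m d = Bmx a b r y z *m (\col_(i < 2) if i == 0 :> nat then u0 else u1) ->
  qstar r y z b 1 * d 0 0 + wstar r y z b 1 * d 1 0
    = (b - a) / (1 - a) * u0 + (1 - b) / (1 - a) * u1 /\
  qstar r y z b 2 * d 0 0 + wstar r y z b 2 * d 1 0
    = kappa a b r y z * u0 + (1 - b) / (1 - a) * betaab a b r y z * u1.
Proof.
move=> hv.
have i0 : ord0 = 0 :> 'I_2 by apply/val_inj.
have i1 : Ordinal (isT : (1 < 2)%N) = 1 :> 'I_2 by apply/val_inj.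
split.
  move: (congr1 (fun M : 'M[F]_(2,1) => M 0 0) hv).
  by rewrite !mxE !mx2_sum !mxE i0 i1 => h; exact h.
move: (congr1 (fun M : 'M[F]_(2,1) => M 1 0) hv).
by rewrite !mxE !mx2_sum !mxE i0 i1 => h; exact h.
Qed.

Lemma gen (l j : nat) : Qb b r y z \in unitmx -> (1 <= l <= f)%N -> (1 <= j)%N ->
  wtail a b r y z f (f - l) j
  = d1 a b r y z l * qstar r y z b j + d2 a b r y z l * wstar r y z b j.
Proof.
move=> hQ /andP[hl1 hlf] hj.
have hv : Qb b r y z *m dvec a b r y z l = Bmx a b r y z *m
   (\col_(i < 2) if i == 0 :> nat then wstar r y z a l else wstar r y z a l.+1).
  by rewrite /dvec /Mmx -mulmxA mulKVmx.
have [e1 e2] := @entries _ _ _ hv.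
rewrite -/(d1 a b r y z l) -/(d2 a b r y z l) in e1 e2.
have W1 : wtail a b r y z f (f - l) 1 = (b - a) / (1 - a) * wstar r y z a l
    + (1 - b) / (1 - a) * wstar r y z a l.+1.
  by rewrite /= /wtail1 subKn // addrC.
have W0 : wtail0 a r y z f (f - l) = wstar r y z a l.
  rewrite /wtail0 subKn //; case: eqP => // h.
  have -> : l = 1%N by lia.
  by [].
have W2 : wtail a b r y z f (f - l) 2 = betaab a b r y z *
    ((b - a) / (1 - a) * wstar r y z a l + (1 - b) / (1 - a) * wstar r y z a l.+1)
    - xab a b r y z * wstar r y z a l.
  by rewrite -W1 -W0.
suff H : forall k, wtail a b r y z f (f - l) k.+1
  = d1 a b r y z l * qstar r y z b k.+1 + d2 a b r y z l * wstar r y z b k.+1 /\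
  wtail a b r y z f (f - l) k.+2
  = d1 a b r y z l * qstar r y z b k.+2 + d2 a b r y z l * wstar r y z b k.+2.
  by case: j hj => // k _; case: (H k).
elim=> [|k [IH1 IH2]].
  split.
    by rewrite W1 (mulrC (d1 _ _ _ _ _ _)) (mulrC (d2 _ _ _ _ _ _)) e1.
  rewrite W2 (mulrC (d1 _ _ _ _ _ _)) (mulrC (d2 _ _ _ _ _ _)) e2 /kappa; ring.
split; first exact: IH2.
rewrite wtail_rec IH1 IH2 (qstar_rec _ k.+1) (wstar_rec _ k.+1); ring.
Qed.

End Gen.

Section Inst.
Variable R : realFieldType.

Definition Xv (i : 'I_3) : {mpoly R[3]} := mpolyX R (mnm1 i).

Lemma tofrac_neq0 (P : {mpoly R[3]}) (v : 'I_3 -> R) : P.@[v] != 0 ->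
  (tofrac P : ratfun R) != 0.
Proof.
move=> hP; rewrite tofrac_eq0; apply: contra hP => /eqP ->.
by rewrite meval0.
Qed.

Lemma rz_neq0 : rz R != 0.
Proof.
apply: (@tofrac_neq0 _ (fun _ => 1)).
by rewrite mevalXU oner_eq0.
Qed.

Lemma rcst_neq0 (c : R) : c != 0 -> rcst c != 0.
Proof. by move=> hc; rewrite /rcst tofrac_eq0 mpolyC_eq0. Qed.

Lemma tau_neq0 (c : R) : tau (rr R) (ry R) (rz R) (rcst c) != 0.
Proof.
have -> : tau (rr R) (ry R) (rz R) (rcst c) = tofrac
  (1 + (1 - c%:MP) ^+ 2 * Xv 0 ^+ 2 * Xv 2 ^+ 2 * Xv 1 * (1 - Xv 1)).
  by rewrite !(tofracB, tofracD, tofracM, tofracXn, tofrac1).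
apply: (@tofrac_neq0 _ (fun _ => 0)).
rewrite !(mevalB, mevalD, mevalM, rmorphXn, meval1, mevalC) /Xv !mevalXU.
by rewrite !mulr0 !mul0r addr0 oner_eq0.
Qed.

End Inst.

Theorem proposition3 (R : realFieldType) (a b : R) (f : nat) :
  0 < a < 1 -> 0 < b < 1 -> (3 <= f)%N ->
  forall l j : nat, (1 <= l <= f)%N -> (1 <= j)%N ->
    let A := rcst a in let B := rcst b in
    let r := rr R in let y := ry R in let z := rz R in
    wbar A B r y z f (f - l) (f + j)
    = d1 A B r y z l * qstar r y z B j + d2 A B r y z l * wstar r y z B j.
Proof.
move=> /andP[ha0 ha1] /andP[hb0 hb1] hf l j hl hj A B r y z.
have hB : B != 0 by apply: rcst_neq0; rewrite gt_eqF.
have hz : z != 0 by exact: rz_neq0.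
have ht : tau r y z B != 0 by exact: tau_neq0.
have hQ : Qb B r y z \in unitmx.
  have -> : Qb B r y z = mx2 (y ^+ 2) 1 (qstar r y z B 2) (wstar r y z B 2) by [].
  apply: mx2_unit.
  rewrite (@det_val _ B r y z ht hB hz) oppr_eq0.
  exact: (mulf_neq0 (expf_neq0 2 hB) (expf_neq0 2 hz)).


have -> : wbar A B r y z f (f - l) (f + j) = wtail A B r y z f (f - l) j.
  rewrite /wbar.
  have -> : (f + j <= f - l)%N = false by lia.
  have -> : (f + j == (f - l).+1) = false by lia.
  have -> : (f + j <= f)%N = false by lia.
  have -> : (f <= f - l)%N = false by lia.
  by rewrite addKn.
exact: gen.
Qed.
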